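(* Let $\Delta x>0$, $\Delta t>0$ and $\lambda\in\mathbb{R}$, and let $(u_{i,j})_{(i,j)\in\mathbb{Z}^2}$ be an arbitrary real-valued grid function. Define $$\varphi_{-1,0}=\tfrac{1}{3}\,(\mu_n u_{-1,0}^2)\,(\mu_n u_{-1,0})+\mu_nD_m^2 u_{-2,0}+\lambda\,\Delta x^2\,D_mD_n\mu_m u_{-2,0},$$ and for $(i,j)\in\mathbb{Z}^2$ let $\varphi_{i,j}=S_m^{\,i+1}S_n^{\,j}\varphi_{-1,0}$ (so that, e.g., $\varphi_{0,0}=S_m\varphi_{-1,0}$). Let the scheme $\mathrm{EC}(\lambda)$ be $$\widetilde{\mathcal{A}}\equiv D_m(\widetilde{F_1})+D_n(\widetilde{G_1})=0,\qquad \widetilde{F_1}=\mu_m\varphi_{-1,0},\qquad \widetilde{G_1}=u_{0,0},$$ and define $$\widetilde{\mathcal{Q}}_3=\varphi_{0,0},\qquad \widetilde{G_3}=\tfrac{1}{12}u_{0,0}^4+\tfrac{1}{2}\,u_{0,0}\,(D_m^2u_{-1,0}),$$ $$\widetilde{F_3}=\tfrac{1}{2}\Big(\varphi_{-1,0}\varphi_{0,0}+(D_m\mu_nu_{-1,0})(D_n\mu_mu_{-1,0})-(\mu_m\mu_nu_{-1,0})(D_mD_nu_{-1,0})+\lambda\,\Delta x^2\,(D_nu_{0,0})(D_nu_{-1,0})\Big).$$ Then the identity $$\widetilde{\mathcal{Q}}_3\,\widetilde{\mathcal{A}}=D_m(\widetilde{F_3})+D_n(\widetilde{G_3})$$ holds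 for every grid function $u$. Consequently, every solution of the scheme $\mathrm{EC}(\lambda)$ satisfies both the discrete mass conservation law $D_m(\widetilde{F_1})+D_n(\widetilde{G_1})=0$ and the discrete energy conservation law $D_m(\widetilde{F_3})+D_n(\widetilde{G_3})=0$ (at every lattice point).
   Context: The scheme $\mathrm{EC}(\lambda)$ is a finite difference discretization, on a uniform grid with spacings $\Delta x,\Delta t$, of the modified Korteweg–de Vries equation $u_t+u^2u_x+u_{xxx}=0$, whose mass and energy conservation laws are $D_t(u)+D_x(\tfrac13u^3+u_{xx})=0$ and $D_t(\tfrac{1}{12}u^4+\tfrac12uu_{xx})+D_x\big(\tfrac12(\tfrac13u^3+u_{xx})^2+u_xu_t-uu_{xt}\big)=0$. Here $u_{i,j}$ approximates $u(x_0+i\Delta x,t_0+j\Delta t)$; all expressions are written relative to a generic lattice point $(0,0)$, and the forward shift operators act on any expression by shifting indices: $S_m u_{i,j}=u_{i+1,j}$, $S_n u_{i,j}=u_{i,j+1}$ (applied to all grid values appearing in the expression). With $I$ the identity, the forward differences and forward averages are $D_m=\tfrac{1}{\Delta x}(S_m-I)$, $D_n=\tfrac{1}{\Delta t}(S_n-I)$, $\mu_m=\tfrac12(S_m+I)$, $\mu_n=\tfrac12(S_n+I)$; e.g. $\mu_n u_{-1,0}^2=\tfrac12(u_{-1,0}^2+u_{-1,1}^2)$ and $D_m^2u_{-2,0}=(u_{0,0}-2u_{-1,0}+u_{-2,0})/\Delta x^2$. Products of operators denote composition, and operators act on the immediately following factor only. *)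

(* Defs.v *)
From Stdlib Require Import Reals ZArith.
Open Scope R_scope.

(* A "grid expression" is represented by its values at all lattice points:
   e i j = value of the expression when written relative to the lattice
   point (i,j) instead of (0,0). *)
Definition gexpr := Z -> Z -> R.

(* u_{a,b} as an expression relative to the generic point (0,0). *)
Definition gval (u : Z -> Z -> R) (a b : Z) : gexpr :=
  fun i j => u (a + i)%Z (b + j)%Z.

Definition gadd (e f : gexpr) : gexpr := fun i j => e i j + f i j.
Definition gsub (e f : gexpr) : gexpr := fun i j => e i j - f i j.
Definition gmul (e f : gexpr) : gexpr := fun i j => e i j * f i j.
Definition gscale (c : R) (e : gexpr) : gexpr := fun i j => c * e i j.
Definition gpow (e : gexpr) (n : nat) : gexpr := fun i j => (e i j) ^ n.

Definition Sm (e : gexpr) : gexpr := fun i j => e (i + 1)%Z j.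
Definition Sn (e : gexpr) : gexpr := fun i j => e i (j + 1)%Z.
Definition Dm (dx : R) (e : gexpr) : gexpr := fun i j => (Sm e i j - e i j) / dx.
Definition Dn (dt : R) (e : gexpr) : gexpr := fun i j => (Sn e i j - e i j) / dt.
Definition mum (e : gexpr) : gexpr := fun i j => (Sm e i j + e i j) / 2.
Definition mun (e : gexpr) : gexpr := fun i j => (Sn e i j + e i j) / 2.

Definition phim1 (dx dt lam : R) (u : Z -> Z -> R) : gexpr :=
  gadd (gadd
    (gscale (1/3) (gmul (mun (gpow (gval u (-1) 0) 2)) (mun (gval u (-1) 0))))
    (mun (Dm dx (Dm dx (gval u (-2) 0)))))
    (gscale (lam * dx ^ 2) (Dm dx (Dn dt (mum (gval u (-2) 0))))).

(* phi_{i,j} = S_m^{i+1} S_n^j phi_{-1,0}, as an expression relative to (0,0) *)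
Definition phi (dx dt lam : R) (u : Z -> Z -> R) (a b : Z) : gexpr :=
  fun i j => phim1 dx dt lam u (a + 1 + i)%Z (b + j)%Z.

Definition F1 dx dt lam u : gexpr := mum (phim1 dx dt lam u).
Definition G1 (u : Z -> Z -> R) : gexpr := gval u 0 0.

Definition A_EC dx dt lam u : gexpr :=
  gadd (Dm dx (F1 dx dt lam u)) (Dn dt (G1 u)).

Definition Q3 dx dt lam u : gexpr := phi dx dt lam u 0 0.

Definition G3 dx (u : Z -> Z -> R) : gexpr :=
  gadd (gscale (1/12) (gpow (gval u 0 0) 4))
       (gscale (1/2) (gmul (gval u 0 0) (Dm dx (Dm dx (gval u (-1) 0))))).

Definition F3 dx dt lam u : gexpr :=
  gscale (1/2)
    (gadd (gsub (gadd
      (gmul (phi dx dt lam u (-1) 0) (phi dx dt lam u 0 0))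
      (gmul (Dm dx (mun (gval u (-1) 0))) (Dn dt (mum (gval u (-1) 0)))))
      (gmul (mum (mun (gval u (-1) 0))) (Dm dx (Dn dt (gval u (-1) 0)))))
      (gscale (lam * dx ^ 2) (gmul (Dn dt (gval u 0 0)) (Dn dt (gval u (-1) 0))))).

(* Main.v *)
Require Import Defs.
From Stdlib Require Import Reals ZArith Lia Lra.
Open Scope R_scope.

Definition sh (u : Z -> Z -> R) (i j k l : Z) : R := u (i + k)%Z (j + l)%Z.

Ltac canon u i j :=
  repeat match goal with
  | |- context [u ?a ?b] =>
      let fa := eval pattern i in a in
      let fb := eval pattern j in b in
      lazymatch fa with ?f _ =>
      lazymatch fb with ?g _ =>
        let k := eval cbv in (f 0%Z) in
        let l := eval cbv in (g 0%Z) in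
        replace (u a b) with (sh u i j k l) by (unfold sh; f_equal; lia)
      end end
  end.

Lemma ident (dx dt lam : R) (Hdx : 0 < dx) (Hdt : 0 < dt) (u : Z -> Z -> R) (i j : Z) :
        Q3 dx dt lam u i j * A_EC dx dt lam u i j
        = gadd (Dm dx (F3 dx dt lam u)) (Dn dt (G3 dx u)) i j.
Proof.
  cbv beta delta [Q3 A_EC F3 G3 F1 G1 phi phim1 gadd gsub gmul gscale gpow
    gval Sm Sn Dm Dn mum mun].
  canon u i j.
  field; lra.
Qed.

Theorem mainTheorem1 (dx dt lam : R) (Hdx : 0 < dx) (Hdt : 0 < dt) :
  forall u : Z -> Z -> R,
    (forall i j : Z,
        Q3 dx dt lam u i j * A_EC dx dt lam u i j
        = gadd (Dm dx (F3 dx dt lam u)) (Dn dt (G3 dx u)) i j)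
    /\
    ((forall i j : Z, A_EC dx dt lam u i j = 0) ->
     forall i j : Z,
       gadd (Dm dx (F1 dx dt lam u)) (Dn dt (G1 u)) i j = 0 /\
       gadd (Dm dx (F3 dx dt lam u)) (Dn dt (G3 dx u)) i j = 0).
Proof.
  intros u; split.
  - intros i j; apply ident; assumption.
  - intros H i j; split.
    + exact (H i j).
    + rewrite <- ident by assumption. rewrite H. ring.
Qed.
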